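(* In the setting below, fix $e\in G_0$, and let $F_e=\{f\in G_0: T_e\cap S_f\neq\emptyset\}$. For $f\in F_e$ put $$\omega_{e,f}=1_e\delta_e\#\sum_{l\in T_e\cap S_f}v_l.$$ Then: (i) the orbits of the conjugation action of $U_e$ on $W_e$ are exactly the sets $\{w_{e,l}: l\in T_e\cap S_f\}$, $f\in F_e$; these are pairwise distinct for distinct $f$, and $\omega_{e,f}$ is the sum of the elements of the corresponding orbit; (ii) $w_e=\sum_{f\in F_e}\omega_{e,f}$; (iii) the elements $\omega_{e,f}$, $f\in F_e$, are central orthogonal idempotents of $B_e$; (iv) for each $f\in F_e$, $B_{e,f}:=B_e\omega_{e,f}=\bigoplus_{g\in G_e,\ l\in T_e\cap S_f}E_g\delta_g\#v_l$ is an ideal of $B_e$ which is a unital algebra with identity $\omega_{e,f}$; (v) $B_e=\bigoplus_{f\in F_e}B_{e,f}$.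
   Context: Groupoid conventions. A groupoid is a small category with all morphisms invertible, regarded as the set $G$ of morphisms. For $g\in G$ we have $d(g)=g^{-1}g$ and $r(g)=gg^{-1}$. The product $gh$ is defined iff $d(g)=r(h)$, and then $d(gh)=d(h)$, $r(gh)=r(g)$. $G^2=\{(g,h):d(g)=r(h)\}$, and $G_0$ is the set of identities. For $e\in G_0$: - $G_e=\{g: d(g)=r(g)=e\}$; - $S_e=\{g\in G: d(g)=e\}$; - $T_e=\{g\in G: r(g)=e\}$. Actions. An action of $G$ on a ring $R$ is a pair $\beta=(\{E_g\},\{\beta_g\})$ where each $E_g=E_{r(g)}$ is an ideal of $R$, each $\beta_g:E_{g^{-1}}\to E_g$ is a ring isomorphism, $\beta_e=\mathrm{id}$ for $e\in G_0$, and $\beta_g\beta_h=\beta_{gh}$ on $E_{h^{-1}}$ for $(g,h)\in G^2$. Skew groupoid ring. $R\star_\beta G=\bigoplus_{g\in G}E_g\delta_g$ (the $\delta_g$ are formal symbols), with $(x\delta_g)(y\delta_h)=x\beta_g(y)\delta_{gh}$ if $(g,h)\in G^2$ and $0$ otherwise, for $x\in E_g$, $y\in E_h$. $KG^*$. The free $K$-module with basis $\{v_g\}_{g\in G}$, with $v_gv_h=\delta_{g,h}v_g$ and identity $\sum_g v_g$. Weak smash product. For a unital $G$-graded algebra $A=\bigoplus A_g$ (with $A_gA_h\subseteq A_{gh}$ if $(g,h)\in G^2$, and $0$ otherwise), $KG^*$ acts by $v_h\cdot a=a_h$ (the $h$-component). $A\#KG^*=A\otimes_K KG^*$ with $(a\#v_g)(b\#v_h)=a(v_{gh^{-1}}\cdot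 b)\#v_h$ if $d(g)=d(h)$, and $0$ otherwise. Setting. $K$ is a commutative unital ring and $G$ is a finite groupoid. $R$ is a not necessarily unital $K$-algebra with an action $\beta$ of $G$ (by $K$-linear maps) such that each $E_e$, $e\in G_0$, has an identity element $1_e$; put $1_g:=1_{r(g)}$, the identity of $E_g$. Then $R\star_\beta G$ is a unital $K$-algebra with identity $\sum_{e\in G_0}1_e\delta_e$. It is $G$-graded with $g$-component $E_g\delta_g$, so that $v_k\cdot(a_g\delta_g)=\delta_{k,g}a_g\delta_g$. Let $B=(R\star_\beta G)\#KG^*=\bigoplus_{g,h\in G}E_g\delta_g\#v_h$ and $$B_0=\bigoplus_{g,h\in G:\ d(g)=r(g)=r(h)}E_g\delta_g\#v_h.$$ Further notation: - $B_e=\bigoplus_{g\in G_e,\,h\in T_e}E_g\delta_g\#v_h$, a unital subalgebra of $B_0$ with identity $w_e=1_e\delta_e\#\sum_{h\in T_e}v_h$; - $W_e=\{w_{e,h}:=1_e\delta_e\#v_h: h\in T_e\}$; - $U_e=\{1_g\delta_g\#\sum_{h\in T_e}v_h: g\in G_e\}$, a subgroup of the units of $B_e$, acting on $W_e$ by conjugation. *)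

(* Defs.v *)
From HB Require Import structures.
From mathcomp Require Import all_boot all_order all_algebra.
Set Implicit Arguments. Unset Strict Implicit. Unset Printing Implicit Defensive.
Import GRing.Theory.
Local Open Scope ring_scope.

(* A finite groupoid, regarded as its (finite) set of morphisms, with
   domain d, range r, inverse and a (total) composition function whose
   value is only meaningful when d g = r h. *)
Record groupoid := Groupoid {
  gT :> finType;
  gd : gT -> gT;
  gr : gT -> gT;
  ginv : gT -> gT;
  gmul : gT -> gT -> gT;
  gd_mul : forall g h, gd g = gr h -> gd (gmul g h) = gd h;
  gr_mul : forall g h, gd g = gr h -> gr (gmul g h) = gr g;
  gmulA : forall g h k, gd g = gr h -> gd h = gr k ->
            gmul (gmul g h) k = gmul g (gmul h k);
  gd_d : forall g, gd (gd g) = gd g;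
  gr_d : forall g, gr (gd g) = gd g;
  gd_r : forall g, gd (gr g) = gr g;
  gr_r : forall g, gr (gr g) = gr g;
  gmul_r : forall g, gmul (gr g) g = g;
  gmul_d : forall g, gmul g (gd g) = g;
  gd_inv : forall g, gd (ginv g) = gr g;
  gr_inv : forall g, gr (ginv g) = gd g;
  gmulV : forall g, gmul g (ginv g) = gr g;
  gmulVg : forall g, gmul (ginv g) g = gd g }.

Record nuAlg (K : comPzRingType) := NuAlg {
  nT :> lmodType K;
  nmul : nT -> nT -> nT;
  nmulA : associative nmul;
  nmulDl : left_distributive nmul +%R;
  nmulDr : right_distributive nmul +%R;
  nmulZl : forall (a : K) x y, nmul (a *: x) y = a *: nmul x y;
  nmulZr : forall (a : K) x y, nmul x (a *: y) = a *: nmul x y }.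

(* E_g := Eid (gr g), so that E_g = E_{r(g)};  1_g := idE (gr g);
   E_{g^-1} = Eid (gr (ginv g)) = Eid (gd g). *)
Record gaction (K : comPzRingType) (G : groupoid) (R : nuAlg K) := GAction {
  Eid : G -> {pred R};
  beta : G -> R -> R;
  idE : G -> R;
  E_0 : forall g, 0 \in Eid (gr g);
  E_sub : forall g x y, x \in Eid (gr g) -> y \in Eid (gr g) -> x - y \in Eid (gr g);
  E_mull : forall g x y, y \in Eid (gr g) -> nmul x y \in Eid (gr g);
  E_mulr : forall g x y, x \in Eid (gr g) -> nmul x y \in Eid (gr g);
  one_in : forall g, idE (gr g) \in Eid (gr g);
  one_l : forall g x, x \in Eid (gr g) -> nmul (idE (gr g)) x = x;
  one_r : forall g x, x \in Eid (gr g) -> nmul x (idE (gr g)) = x;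
  beta_in : forall g x, x \in Eid (gd g) -> beta g x \in Eid (gr g);
  betaD : forall g x y, x \in Eid (gd g) -> y \in Eid (gd g) ->
            beta g (x + y) = beta g x + beta g y;
  betaM : forall g x y, x \in Eid (gd g) -> y \in Eid (gd g) ->
            beta g (nmul x y) = nmul (beta g x) (beta g y);
  betaZ : forall g (a : K) x, x \in Eid (gd g) -> beta g (a *: x) = a *: beta g x;
  beta_inj : forall g x y, x \in Eid (gd g) -> y \in Eid (gd g) ->
            beta g x = beta g y -> x = y;
  beta_surj : forall g y, y \in Eid (gr g) -> exists2 x, x \in Eid (gd g) & beta g x = y;
  beta_id : forall e x, gd e = e -> x \in Eid e -> beta e x = x;
  beta_comp : forall g h x, gd g = gr h -> x \in Eid (gd h) ->
            beta g (beta h x) = beta (gmul g h) x }.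

Section B.
Variables (K : comPzRingType) (G : groupoid) (R : nuAlg K) (A : gaction G R).

(* Elements of B = (R *_beta G) # KG^* : the coefficient at (g, h) is the
   component of  E_g delta_g # v_h. *)
Definition BT := {ffun G * G -> R}.

(* x delta_k # v_g *)
Definition belem (x : R) (k g : G) : BT :=
  [ffun p => if p == (k, g) then x else 0].

Definition inB (x : BT) : Prop := forall p : G * G, x p \in Eid A (gr p.1).

(* Multiplication of B, the bilinear extension of
   (x d_k # v_g)(y d_m # v_h) = x d_k (v_{g h^-1} . y d_m) # v_h   if d g = d h,
   with v_{g h^-1} . (y d_m) = [m = g h^-1] y d_m and
   (x d_k)(y d_m) = x beta_k(y) d_{km}  if d k = r m. *)
Definition Bmul (x y : BT) : BT :=
  \sum_(kg : G * G) \sum_(mh : G * G)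
    (if [&& gd kg.2 == gd mh.2, mh.1 == gmul kg.2 (ginv mh.2)
          & gd kg.1 == gr mh.1]
     then belem (nmul (x kg) (beta A kg.1 (y mh))) (gmul kg.1 mh.1) mh.2
     else 0).

Definition inBe (e : G) (x : BT) : Prop :=
  inB x /\ forall g h : G,
    ~~ [&& gd g == e, gr g == e & gr h == e] -> x (g, h) = 0.

Definition wel (e h : G) : BT := belem (idE A e) e h.
Definition we (e : G) : BT := \sum_(h : G | gr h == e) wel e h.

Definition inW (e : G) (x : BT) : Prop := exists h : G, gr h = e /\ x = wel e h.

Definition inU (e : G) (u : BT) : Prop :=
  exists g : G, [/\ gd g = e, gr g = e &
    u = \sum_(h : G | gr h == e) belem (idE A (gr g)) g h].

(* The orbit of w under conjugation by U_e: the elements u w u^-1, where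
   u ranges over U_e and u^-1 is the inverse of u in B_e. *)
Definition Uorbit (e : G) (w x : BT) : Prop :=
  exists u u' : BT, [/\ inU e u, inBe e u', Bmul u u' = we e, Bmul u' u = we e
                      & x = Bmul (Bmul u w) u'].

Definition Fe (e : G) : {pred G} :=
  [pred f | (gd f == f) && [exists l : G, (gr l == e) && (gd l == f)]].

Definition Oset (e f : G) (x : BT) : Prop :=
  exists l : G, [/\ gr l = e, gd l = f & x = wel e l].

Definition omega (e f : G) : BT :=
  \sum_(l : G | (gr l == e) && (gd l == f)) belem (idE A e) e l.

Definition Bef (e f : G) (x : BT) : Prop :=
  exists2 y : BT, inBe e y & x = Bmul y (omega e f).

End B.

(* Main.v *)
Require Import Defs.
From HB Require Import structures.
From mathcomp Require Import all_boot all_order all_algebra.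
Set Implicit Arguments. Unset Strict Implicit. Unset Printing Implicit Defensive.
Import GRing.Theory.
Local Open Scope ring_scope.

Section Gpd.
Variable G : groupoid.
Implicit Types a b g h : G.

Lemma mulKV a b : gd a = gr b -> gmul (gmul a b) (ginv b) = a.
Proof.
move=> H; rewrite gmulA ?gr_inv // gmulV -H gmul_d //.
Qed.

Lemma mulVK a b : gd a = gd b -> gmul (gmul a (ginv b)) b = a.
Proof.
move=> H; rewrite gmulA ?gr_inv ?gd_inv // gmulVg -H gmul_d //.
Qed.

Lemma gr_mulV a b : gd a = gd b -> gr (gmul a (ginv b)) = gr a.
Proof. by move=> H; rewrite gr_mul // gr_inv. Qed.

Lemma gd_mulV a b : gd a = gd b -> gd (gmul a (ginv b)) = gr b.
Proof. by move=> H; rewrite gd_mul ?gr_inv // gd_inv. Qed.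

Lemma mulKl g a : gd g = gr a -> gmul (ginv g) (gmul g a) = a.
Proof.
move=> H; rewrite -gmulA ?gd_inv // gmulVg H gmul_r //.
Qed.

Lemma mulKl' g a : gr a = gr g -> gmul g (gmul (ginv g) a) = a.
Proof.
move=> H; rewrite -gmulA ?gr_inv ?gd_inv // gmulV -H gmul_r //.
Qed.

Lemma cancel_r a b h : gd a = gr h -> gd b = gr h -> gmul a h = gmul b h -> a = b.
Proof. by move=> Ha Hb E; rewrite -(mulKV Ha) E mulKV. Qed.

Lemma cancel_l g a b : gd g = gr a -> gd g = gr b -> gmul g a = gmul g b -> a = b.
Proof. by move=> Ha Hb E; rewrite -(mulKl Ha) E mulKl. Qed.

Lemma ginvK g : ginv (ginv g) = g.
Proof.
apply: (@cancel_l (ginv g)); rewrite ?gr_inv ?gd_inv //.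
by rewrite gmulV gmulVg gr_inv.
Qed.
End Gpd.

Section Alg.
Variables (K : comPzRingType) (G : groupoid) (R : nuAlg K) (A : gaction G R).
Implicit Types (g h k l m : G) (x y : BT G R).

Lemma nmul0l (y : R) : nmul 0 y = 0.
Proof.
have H := nmulDl (0 : R) 0 y; rewrite addr0 in H.
by apply: (addrI (nmul (0 : R) y)); rewrite addr0 -H.
Qed.

Lemma nmul0r (y : R) : nmul y 0 = 0.
Proof.
have H := nmulDr y (0 : R) 0; rewrite addr0 in H.
by apply: (addrI (nmul y (0 : R))); rewrite addr0 -H.
Qed.

Lemma Eid0d g : (0 : R) \in Eid A (gd g).
Proof. by have := E_0 A (gd g); rewrite gr_d. Qed.

Lemma beta0 g : beta A g 0 = 0.
Proof.
have H := betaD (Eid0d g) (Eid0d g); rewrite addr0 in H.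
by apply: (addrI (beta A g 0)); rewrite addr0 -H.
Qed.

Lemma EidD g (a b : R) : a \in Eid A (gr g) -> b \in Eid A (gr g) -> a + b \in Eid A (gr g).
Proof.
move=> Ha Hb; have := E_sub Ha (E_sub (E_0 A g) Hb).
by rewrite sub0r opprK.
Qed.

Lemma EidZ g (c : K) (a : R) : a \in Eid A (gr g) -> c *: a \in Eid A (gr g).
Proof.
move=> Ha; rewrite -(one_l Ha) -nmulZl; exact: E_mull.
Qed.

Lemma one_ind g : idE A (gd g) \in Eid A (gd g).
Proof. by have := one_in A (gd g); rewrite gr_d. Qed.

Lemma one_ld g (a : R) : a \in Eid A (gd g) -> nmul (idE A (gd g)) a = a.
Proof. by have := @one_l _ _ _ A (gd g) a; rewrite gr_d. Qed.

Lemma beta_one g : beta A g (idE A (gd g)) = idE A (gr g).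
Proof.
have [x0 Hx0 Ex0] := beta_surj (one_in A g).
have Hb : beta A g (idE A (gd g)) \in Eid A (gr g) by apply: beta_in; exact: one_ind.
rewrite -(one_r Hb) -Ex0 -betaM ?one_ind //.
by rewrite one_ld.
Qed.

Lemma nz_if (c : bool) (v : R) : (if c then v else 0) != 0 -> c && (v != 0).
Proof. by case: c; rewrite ?eqxx. Qed.

Lemma nmul_nz (a b : R) : nmul a b != 0 -> (a != 0) && (b != 0).
Proof.
by case: (eqVneq a 0) => [->|]; rewrite ?nmul0l ?eqxx //; case: (eqVneq b 0) => [->|]; rewrite ?nmul0r ?eqxx.
Qed.

Lemma beta_nz g (a : R) : beta A g a != 0 -> a != 0.
Proof. by apply: contraNneq => ->; rewrite beta0. Qed.

Lemma sum_single (I : finType) (F : I -> R) j :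
  (forall i, F i != 0 -> i = j) -> \sum_i F i = F j.
Proof.
move=> H; rewrite (bigD1 j) //= big1 ?addr0 // => i ne.
by apply/eqP; apply: contraNT ne => /H ->.
Qed.

Lemma sum_singleB (I : finType) (F : I -> BT G R) j :
  (forall i, F i != 0 -> i = j) -> \sum_i F i = F j.
Proof.
move=> H; rewrite (bigD1 j) //= big1 ?addr0 // => i ne.
by apply/eqP; apply: contraNT ne => /H ->.
Qed.

Lemma belemE (c : R) k g p : belem c k g p = if p == (k, g) then c else 0.
Proof. by rewrite ffunE. Qed.

Lemma sum_belemE (P : pred G) (c : R) k p :
  (\sum_(l | P l) belem c k l) p = if (p.1 == k) && P p.2 then c else 0.
Proof.
case: p => p1 p2 /=; rewrite sum_ffunE big_mkcond /=.
rewrite (sum_single (j := p2)) => [|i].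
  rewrite belemE xpair_eqE eqxx.
  by case: (P p2); case: (p1 == k).
case: (P i); rewrite ?eqxx // belemE xpair_eqE.
by case: (p1 == k); case: (eqVneq p2 i); rewrite ?eqxx.
Qed.

Lemma ifBE (c : bool) (f : BT G R) p : (if c then f else 0) p = if c then f p else 0.
Proof. by case: c; rewrite ?ffunE. Qed.

Lemma Bcoef2 x y p :
  Bmul A x y p = \sum_(kg : G * G)
    (if [&& gd kg.2 == gd p.2, gd kg.1 == gr (gmul kg.2 (ginv p.2))
          & p.1 == gmul kg.1 (gmul kg.2 (ginv p.2))]
     then nmul (x kg) (beta A kg.1 (y (gmul kg.2 (ginv p.2), p.2))) else 0).
Proof.
rewrite /Bmul sum_ffunE; apply: eq_bigr => [[k g]] _ /=.
rewrite sum_ffunE (sum_single (j := (gmul g (ginv p.2), p.2))).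
  rewrite ifBE belemE eqxx /=.
  case: p => p1 p2 /=; rewrite xpair_eqE eqxx.
  by case: (gd g == gd p2); case: (gd k == _); case: (p1 == _).
case=> m h /=; rewrite ifBE belemE => /nz_if /andP [/and3P [/eqP dg /eqP mE dk]].
move=> /nz_if /andP [/eqP pE _].
by rewrite mE; case: p pE => p1 p2 [_ ->].
Qed.

End Alg.

Section E.
Variables (K : comPzRingType) (G : groupoid) (R : nuAlg K) (A : gaction G R).
Variables (e : G) (he : gd e = e).
Implicit Types (g h k l m : G) (x y : BT G R).

Lemma gre : gr e = e.
Proof. by rewrite -{1}he gr_d. Qed.

Lemma Be_nz x k g : inBe A e x -> x (k, g) != 0 -> [/\ gd k = e, gr k = e & gr g = e].
Proof.
move=> [_ H] nz; case/boolP: [&& gd k == e, gr k == e & gr g == e].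
  by case/and3P => /eqP ? /eqP ? /eqP.
by move/H/eqP; rewrite (negbTE nz).
Qed.

Lemma mul_omegaP (P : pred G) x : inBe A e x ->
  Bmul A x (\sum_(l | (gr l == e) && P l) belem (idE A e) e l) =
  [ffun p => if P p.2 then x p else 0].
Proof.
move=> Bx; apply/ffunP => [[p1 p2]]; rewrite ffunE Bcoef2 /=.
rewrite (sum_single (j := (p1, p2))) /=; last first.
  case=> k g /= /nz_if /andP [/and3P [/eqP dg /eqP dk /eqP pE]].
  move=> /nmul_nz /andP [nzx /beta_nz]; rewrite sum_belemE /=.
  move=> /nz_if /andP [/andP [/eqP mE /andP [/eqP rp2 _]] _].
  have [dk' rk rg] := Be_nz Bx nzx.
  have gE : g = p2 by rewrite -(mulVK dg) mE -rp2 gmul_r.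
  by rewrite pE mE -dk' gmul_d gE.
case: (eqVneq (x (p1, p2)) 0) => [->|nzx]; first by rewrite nmul0l; case: ifP; case: ifP.
have [dp1 rp1 rp2] := Be_nz Bx nzx.
have E1 : gmul p1 e = p1 by rewrite -dp1 gmul_d.
rewrite eqxx gmulV gr_r rp2 dp1 E1 !eqxx /= sum_belemE /= rp2 !eqxx /=.
case: (P p2); last by rewrite beta0 nmul0r.
have Hx : x (p1, p2) \in Eid A (gr p1) by case: Bx => H _; exact: (H (p1, p2)).
by rewrite -dp1 beta_one one_r.
Qed.

Lemma inB_in x p : inB A x -> x p \in Eid A (gr p.1).
Proof. by move=> H; exact: H. Qed.

Lemma omegaQ_mul (Q : pred G) x : inBe A e x ->
  Bmul A (\sum_(l | (gr l == e) && Q (gd l)) belem (idE A e) e l) x =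
  [ffun p => if Q (gd p.2) then x p else 0].
Proof.
move=> Bx; apply/ffunP => [[p1 p2]]; rewrite ffunE Bcoef2 /=.
case: (eqVneq (x (p1, p2)) 0) => [x0|nzx].
  rewrite x0 if_same big1 // => [[k g]] _ /=; apply/eqP; apply: contraT.
  move=> /nz_if /andP [/and3P [/eqP dg /eqP dk /eqP pE]].
  move=> /nmul_nz /andP [nzw /beta_nz nzy]; move: nzw; rewrite sum_belemE /=.
  move=> /nz_if /andP [/andP [/eqP kE /andP [/eqP rg _]] _].
  have rm : gr (gmul g (ginv p2)) = e by rewrite gr_mulV.
  move: pE; rewrite kE -{1}rm gmul_r => pE.
  by move: nzy; rewrite -pE x0 eqxx.
have [dp1 rp1 rp2] := Be_nz Bx nzx.
have dp12 : gd p1 = gr p2 by rewrite dp1 rp2.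
rewrite (sum_single (j := (e, gmul p1 p2))) /=; last first.
  case=> k g /= /nz_if /andP [/and3P [/eqP dg /eqP dk /eqP pE]].
  move=> /nmul_nz /andP [nzw _]; move: nzw; rewrite sum_belemE /=.
  move=> /nz_if /andP [/andP [/eqP kE /andP [/eqP rg _]] _].
  have rm : gr (gmul g (ginv p2)) = e by rewrite gr_mulV.
  move: pE; rewrite kE -{1}rm gmul_r => pE.
  by rewrite pE mulVK.
have E2 : gmul e p1 = p1 by rewrite -{1}rp1 gmul_r.
rewrite gd_mul // mulKV // eqxx rp1 he E2 !eqxx /=.
rewrite sum_belemE /= eqxx gr_mul // rp1 eqxx gd_mul //=.
case: (Q (gd p2)); last by rewrite nmul0l.
have Hx : x (p1, p2) \in Eid A e by rewrite -rp1; exact: inB_in (proj1 Bx).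
rewrite beta_id //; have := @one_l _ _ _ A e (x (p1, p2)); rewrite gre; apply.
exact: Hx.
Qed.

Lemma belem_mul (c : R) k g y p : Bmul A (belem c k g) y p =
  if [&& gd g == gd p.2, gd k == gr (gmul g (ginv p.2)) & p.1 == gmul k (gmul g (ginv p.2))]
  then nmul c (beta A k (y (gmul g (ginv p.2), p.2))) else 0.
Proof.
rewrite Bcoef2 (sum_single (j := (k, g))) /= ?belemE ?eqxx //.
case=> k' g' /=; rewrite belemE; case: (eqVneq (k', g') (k, g)) => [//|ne].
by rewrite nmul0l if_same eqxx.
Qed.

Lemma one_e : idE A e \in Eid A e.
Proof. by have := one_in A e; rewrite gre. Qed.

Lemma one_le (a : R) : a \in Eid A e -> nmul (idE A e) a = a.
Proof. by have := @one_l _ _ _ A e a; rewrite gre. Qed.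

Lemma belem_inBe (c : R) k h : c \in Eid A e -> gd k = e -> gr k = e -> gr h = e ->
  inBe A e (belem c k h).
Proof.
move=> Hc dk rk rh; split.
  case=> p1 p2; rewrite belemE; case: eqP => [[-> _]|_] /=; [by rewrite rk | exact: E_0].
move=> g' h' H; rewrite belemE; case: eqP => // [[Eg Eh]]; move: H.
by rewrite Eg Eh dk rk rh !eqxx.
Qed.

Definition uu g : BT G R := \sum_(h : G | gr h == e) belem (idE A (gr g)) g h.

Lemma uu_inBe c : gd c = e -> gr c = e -> inBe A e (uu c).
Proof.
move=> dc rc; split.
  case=> p1 p2; rewrite sum_belemE /=; case: ifP => [/andP [/eqP -> _]|_];
    [exact: one_in | exact: E_0].
move=> g' h' H; rewrite sum_belemE /=; case: ifP => // /andP [/eqP Eg /eqP rh].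
by move: H; rewrite Eg dc rc rh !eqxx.
Qed.

Lemma u_mul g y : gd g = e -> gr g = e -> inBe A e y ->
  Bmul A (uu g) y =
  [ffun p => if gr p.1 == e then beta A g (y (gmul (ginv g) p.1, p.2)) else 0].
Proof.
move=> dg rg By; apply/ffunP => [[p1 p2]]; rewrite ffunE Bcoef2 /=.
set m := gmul (ginv g) p1.
have key : forall kg, (if [&& gd kg.2 == gd p2, gd kg.1 == gr (gmul kg.2 (ginv p2))
          & p1 == gmul kg.1 (gmul kg.2 (ginv p2))]
     then nmul (uu g kg) (beta A kg.1 (y (gmul kg.2 (ginv p2), p2))) else 0) != 0 ->
     [/\ kg = (g, gmul m p2), gr p1 = e & y (m, p2) != 0].
  case=> k g' /= /nz_if /andP [/and3P [/eqP dg' /eqP dk /eqP pE]].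
  move=> /nmul_nz /andP [nzu /beta_nz nzy]; move: nzu; rewrite sum_belemE /=.
  move=> /nz_if /andP [/andP [/eqP kE _] _].
  move: dk pE; rewrite kE => dk pE.
  have mE : m = gmul g' (ginv p2) by rewrite /m pE mulKl.
  split; first by rewrite mE mulVK.
    by rewrite pE gr_mul.
  by rewrite mE.
case: (boolP ((gr p1 == e) && (y (m, p2) != 0))) => [/andP [/eqP rp1 nzy]|H].
  have [dm rm rp2] := Be_nz By nzy.
  rewrite (sum_single (j := (g, gmul m p2))) /=; last by move=> i /key [].
  rewrite rp1 eqxx gd_mul ?dm ?rp2 // eqxx mulKV ?dm ?rp2 // dg rm eqxx.
  rewrite mulKl' ?rp1 ?rg // eqxx /= sum_belemE /= eqxx gr_mul ?dm ?rp2 // rm eqxx /=.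
  apply: one_l; apply: beta_in; rewrite dg -rm; exact: inB_in (proj1 By).
rewrite big1; last by move=> i _; apply/eqP; apply: contraT => /key [_ rp1 nzy]; move: H; rewrite rp1 nzy eqxx.
case: ifP => // rp1; move: H; rewrite rp1 /= negbK => /eqP ->.
by rewrite beta0.
Qed.

Lemma u_wel g h : gd g = e -> gr g = e -> gr h = e ->
  Bmul A (uu g) (wel A e h) = belem (idE A e) g h.
Proof.
move=> dg rg rh; rewrite u_mul //; last by apply: belem_inBe; rewrite ?he ?gre //; exact: one_e.
have b1 : beta A g (idE A e) = idE A e by rewrite -{1}dg beta_one rg.
apply/ffunP => [[p1 p2]]; rewrite ffunE /wel !belemE /= !xpair_eqE.
case: (eqVneq p1 g) => [->|ne].
  rewrite rg eqxx gmulVg dg eqxx /=; case: (p2 == h) => //; exact: beta0.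
rewrite /=; case: ifP => // /eqP rp1.
have -> : (gmul (ginv g) p1 == e) = false.
  apply/negbTE/eqP => E; move/eqP: ne; apply.
  rewrite -(@mulKl' _ g p1); last by rewrite rp1 rg.
  by rewrite E -dg gmul_d.
exact: beta0.
Qed.

Lemma belem_u g h : gd g = e -> gr g = e -> gr h = e ->
  Bmul A (belem (idE A e) g h) (uu (ginv g)) = wel A e (gmul g h).
Proof.
move=> dg rg rh; apply/ffunP => [[p1 p2]]; rewrite belem_mul /wel belemE sum_belemE /=.
case: (eqVneq (p1, p2) (e, gmul g h)) => [[-> ->]|ne].
  have dgh : gd (gmul g h) = gd h by rewrite gd_mul // dg rh.
  have inv : gmul h (ginv (gmul g h)) = ginv g.
    apply: (@cancel_r _ _ _ (gmul g h)).
    - by rewrite gd_mulV.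
    - by rewrite gd_inv gr_mul // dg rh.
    by rewrite mulVK // mulKl // dg rh.
  rewrite dgh eqxx inv gr_inv eqxx gmulV rg eqxx /= gr_mul ?dg ?rh // rg !eqxx /=.
  rewrite -{2}dg beta_one rg; apply: one_le; exact: one_e.
case: ifP => // /and3P [/eqP dh /eqP _ /eqP pE].
case: ifP => [/andP [/eqP mE /eqP rp2]|_]; last by rewrite beta0 nmul0r.
exfalso; move/eqP: ne; apply.
rewrite pE mE gmulV rg -(mulVK dh) mE mulKl' // rp2 rg //.
Qed.

Lemma inv_unique g u' : gd g = e -> gr g = e -> inBe A e u' ->
  Bmul A (uu g) u' = we A e -> u' = uu (ginv g).
Proof.
move=> dg rg Bu E; apply/ffunP => [[m p2]]; rewrite sum_belemE /= gr_inv dg.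
case: (boolP [&& gd m == e, gr m == e & gr p2 == e]) => [/and3P [/eqP dm /eqP rm /eqP rp2]|H]; last first.
  rewrite (proj2 Bu _ _ H); case: ifP => // /andP [/eqP mE /eqP rp2].
  by move: H; rewrite mE gd_inv gr_inv rg dg rp2 !eqxx.
have := congr1 (fun z : BT G R => z (gmul g m, p2)) E.
rewrite u_mul // ffunE /= gr_mul ?rg ?dg ?rm // eqxx mulKl ?dg ?rm //.
rewrite /we /wel sum_belemE /= rp2 !eqxx andbT.
have Hu : u' (m, p2) \in Eid A (gd g) by rewrite dg -rm; exact: inB_in (proj1 Bu).
case: (eqVneq m (ginv g)) => [mE|ne].
  move: Hu; rewrite mE gmulV rg eqxx => Hu Eb.
  apply: (@beta_inj _ _ _ A g); [exact: Hu | rewrite dg; exact: one_e |].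
  by rewrite Eb -{2}dg beta_one rg.
have -> : (gmul g m == e) = false.
  apply/negbTE/eqP => E2; move/eqP: ne; apply; apply: (@cancel_l _ g).
  - by rewrite dg rm.
  - by rewrite gr_inv.
  by rewrite E2 gmulV rg.
move=> Eb; apply: (@beta_inj _ _ _ A g); [exact: Hu | exact: Eid0d | by rewrite Eb beta0].
Qed.

Lemma uu_inv c : gd c = e -> gr c = e -> Bmul A (uu c) (uu (ginv c)) = we A e.
Proof.
move=> dc rc; rewrite u_mul //; last by apply: uu_inBe; rewrite ?gd_inv ?gr_inv.
have E3 : gmul (ginv c) e = ginv c by rewrite -rc -gd_inv gmul_d.
apply/ffunP => [[p1 p2]]; rewrite ffunE /we /wel !sum_belemE /= gr_inv dc.
case: (eqVneq p1 e) => [->|ne].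
  rewrite gre eqxx E3 eqxx /=; case: (gr p2 == e); last exact: beta0.
  by rewrite -{1}dc beta_one rc.
case: ifP => //= /eqP rp1.
have -> : (gmul (ginv c) p1 == ginv c) = false.
  apply/negbTE/eqP => E; move/eqP: ne; apply; apply: (@cancel_l _ (ginv c) p1 e).
  - by rewrite gd_inv rc rp1.
  - by rewrite gd_inv rc gre.
  by rewrite E E3.
exact: beta0.
Qed.

End E.

Section M.
Variables (K : comPzRingType) (G : groupoid) (R : nuAlg K) (A : gaction G R).
Variables (e : G) (he : gd e = e).
Implicit Types (g h k l m f : G) (x y : BT G R).

Lemma orbit_char h : gr h = e -> forall x, Uorbit A e (wel A e h) x <-> Oset A e (gd h) x.
Proof.
move=> rh x; split.
  case=> u [u' [[g [dg rg ->]] Bu' uu' _ ->]].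
  have uu'' : Bmul A (uu A e g) u' = we A e := uu'.
  rewrite (inv_unique he dg rg Bu' uu'').
  change (Oset A e (gd h) (Bmul A (Bmul A (uu A e g) (wel A e h)) (uu A e (ginv g)))).
  rewrite u_wel // belem_u //; exists (gmul g h); split => //.
    by rewrite gr_mul // dg rh.
  by rewrite gd_mul // dg rh.
case=> l [rl dl ->].
have dg : gd (gmul l (ginv h)) = e by rewrite gd_mulV.
have rg : gr (gmul l (ginv h)) = e by rewrite gr_mulV.
exists (uu A e (gmul l (ginv h))), (uu A e (ginv (gmul l (ginv h)))); split.
- by exists (gmul l (ginv h)).
- by apply: uu_inBe; rewrite ?gd_inv ?gr_inv.
- exact: uu_inv.
- have := @uu_inv _ _ _ A e he (ginv (gmul l (ginv h))); rewrite ginvK; apply.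
    by rewrite gd_inv.
  by rewrite gr_inv.
by rewrite u_wel // belem_u // mulVK.
Qed.

Lemma omega_coef f p : omega A e f p =
  if (p.1 == e) && ((gr p.2 == e) && (gd p.2 == f)) then idE A e else 0.
Proof. exact: sum_belemE. Qed.

Lemma omega_inBe f : inBe A e (omega A e f).
Proof.
split.
  move=> p; rewrite omega_coef; case: ifP => [/andP [/eqP -> _]|_]; last exact: E_0.
  rewrite (gre he); exact: (one_e A he).
move=> g h H; rewrite omega_coef /=; case: ifP => // /andP [/eqP ge /andP [/eqP rh _]].
by move: H; rewrite ge he (gre he) rh !eqxx.
Qed.

Lemma mul_omega x f : inBe A e x ->
  Bmul A x (omega A e f) = [ffun p => if gd p.2 == f then x p else 0].
Proof. move=> Bx; exact: (@mul_omegaP _ _ _ A e (fun l => gd l == f) x Bx). Qed.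

Lemma omega_mul x f : inBe A e x ->
  Bmul A (omega A e f) x = [ffun p => if gd p.2 == f then x p else 0].
Proof. move=> Bx; exact: (@omegaQ_mul _ _ _ A e he (fun l => l == f) x Bx). Qed.

Definition Hs f x := forall g h : G,
  ~~ [&& gd g == e, gr g == e, gr h == e & gd h == f] -> x (g, h) = 0.

Lemma Hs_inBe f x : inB A x -> Hs f x -> inBe A e x.
Proof.
move=> Bx Hx; split => // g h H; apply: Hx; apply: contra H.
by case/and4P => -> -> -> _.
Qed.

Lemma Hs_restr f x : Hs f x -> [ffun p => if gd p.2 == f then x p else 0] = x.
Proof.
move=> Hx; apply/ffunP => [[g h]]; rewrite ffunE /=; case: (eqVneq (gd h) f) => // ne.
by rewrite Hx // (negbTE ne) !andbF.
Qed.

Lemma Hs_nz f x g h : Hs f x -> x (g, h) != 0 ->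
  [/\ gd g = e, gr g = e, gr h = e & gd h = f].
Proof.
move=> Hx nz; case/boolP: [&& gd g == e, gr g == e, gr h == e & gd h == f].
  by case/and4P => /eqP ? /eqP ? /eqP ? /eqP.
by move/Hx/eqP; rewrite (negbTE nz).
Qed.

Lemma Bef_char f x : Bef A e f x <-> inB A x /\ Hs f x.
Proof.
split.
  case=> y By ->; rewrite mul_omega //; split.
    move=> p; rewrite ffunE; case: ifP => _; [exact: inB_in (proj1 By) | exact: E_0].
  move=> g h H; rewrite ffunE /=; case: (eqVneq (gd h) f) => [dh|//].
  apply: (proj2 By); apply: contra H => /and3P [-> -> ->].
  by rewrite dh eqxx.
case=> Bx Hx; exists x; first exact: Hs_inBe Hx.
by rewrite mul_omega ?Hs_restr //; exact: Hs_inBe Hx.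
Qed.

Lemma Bmul_inB x y : inB A x -> inB A (Bmul A x y).
Proof.
move=> Bx p; rewrite Bcoef2; apply: (big_ind (fun v : R => v \in Eid A (gr p.1))).
- exact: E_0.
- by move=> a b; apply: EidD.
case=> k g _ /=; case: ifP => [/and3P [_ /eqP dk /eqP pE]|_]; last exact: E_0.
rewrite pE gr_mul //; apply: E_mulr; exact: (Bx (k, g)).
Qed.

Lemma Bmul_zero x y p :
  (forall k g, x (k, g) != 0 -> y (gmul g (ginv p.2), p.2) != 0 -> gd g = gd p.2 ->
     gd k = gr (gmul g (ginv p.2)) -> p.1 = gmul k (gmul g (ginv p.2)) -> False) ->
  Bmul A x y p = 0.
Proof.
move=> H; rewrite Bcoef2 big1 // => [[k g]] _ /=; apply/eqP; apply: contraT.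
move=> /nz_if /andP [/and3P [/eqP dg /eqP dk /eqP pE] /nmul_nz /andP [nx /beta_nz ny]].
case: (H k g nx ny dg dk pE).
Qed.

Lemma Fe_dl l : gr l = e -> gd l \in Fe e.
Proof.
move=> rl; rewrite inE /= gd_d eqxx /=; apply/existsP; exists l.
by rewrite rl !eqxx.
Qed.

Lemma Fe_ex f : f \in Fe e -> exists l, gr l = e /\ gd l = f.
Proof.
rewrite inE => /andP [_ /existsP [l /andP [/eqP ? /eqP ?]]].
by exists l.
Qed.

Lemma belem0 k g : belem (0 : R) k g = 0.
Proof. by apply/ffunP => p; rewrite belemE !ffunE if_same. Qed.

End M.

Theorem lemma3p4 (K : comPzRingType) (G : groupoid) (R : nuAlg K)
    (A : gaction G R) (e : G) (he : gd e = e) :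
  [/\
   (* (i) *)
   [/\ (forall w : BT G R, inW A e w ->
          exists2 f : G, f \in Fe e & forall x, Uorbit A e w x <-> Oset A e f x),
       (forall f : G, f \in Fe e ->
          exists2 w : BT G R, inW A e w & forall x, Uorbit A e w x <-> Oset A e f x),
       (idE A e != 0 -> forall f f' : G, f \in Fe e -> f' \in Fe e -> f != f' ->
          ~ (forall x, Oset A e f x <-> Oset A e f' x))
     & (forall f : G, f \in Fe e ->
          exists s : seq (BT G R), [/\ uniq s, (forall x, x \in s <-> Oset A e f x)
                                   & omega A e f = \sum_(x <- s) x])],
   (* (ii) *)
   we A e = \sum_(f : G | f \in Fe e) omega A e f,
   (* (iii) *)
   (forall f : G, f \in Fe e ->
      [/\ inBe A e (omega A e f),
          Bmul A (omega A e f) (omega A e f) = omega A e f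
        & forall x, inBe A e x -> Bmul A x (omega A e f) = Bmul A (omega A e f) x])
   /\ (forall f f' : G, f \in Fe e -> f' \in Fe e -> f != f' ->
         Bmul A (omega A e f) (omega A e f') = 0),
   (* (iv) *)
   (forall f : G, f \in Fe e ->
      [/\ forall x, Bef A e f x <->
            (inB A x /\ forall g h : G,
               ~~ [&& gd g == e, gr g == e, gr h == e & gd h == f] -> x (g, h) = 0),
          (* ideal of B_e *)
          Bef A e f 0 /\ (forall x y, Bef A e f x -> Bef A e f y -> Bef A e f (x - y)),
          (forall (a : K) x, Bef A e f x -> Bef A e f (a *: x)),
          (forall a x, inBe A e a -> Bef A e f x ->
             Bef A e f (Bmul A a x) /\ Bef A e f (Bmul A x a))
        & (* unital with identity omega_{e,f} *)
          Bef A e f (omega A e f) /\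
          (forall x, Bef A e f x ->
             Bmul A (omega A e f) x = x /\ Bmul A x (omega A e f) = x)])
 & (* (v) *)
   (forall x, inBe A e x ->
      exists y : G -> BT G R, (forall f, f \in Fe e -> Bef A e f (y f)) /\
                            x = \sum_(f : G | f \in Fe e) y f)
   /\ (forall y y' : G -> BT G R,
         (forall f, f \in Fe e -> Bef A e f (y f) /\ Bef A e f (y' f)) ->
         \sum_(f : G | f \in Fe e) y f = \sum_(f : G | f \in Fe e) y' f ->
         forall f, f \in Fe e -> y f = y' f)].
Proof.
have nz0 : forall (z : BT G R) f' p, f' \in Fe e -> Bef A e f' z -> z p != 0 -> gd p.2 = f'.
  move=> z f' [p1 p2] Ff' /Bef_char [_ Hz] nz /=.
  have [_ _ _] := Hs_nz Hz nz; done.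
split.
- split.
  + move=> w [h [rh ->]]; exists (gd h); [exact: Fe_dl | exact: orbit_char].
  + move=> f Ff; have [l [rl dl]] := Fe_ex Ff; exists (wel A e l); first by exists l.
    rewrite -dl; exact: orbit_char.
  + move=> nz f f' Ff Ff' ne H; have [l [rl dl]] := Fe_ex Ff.
    have [l' [rl' dl' E]] : Oset A e f' (wel A e l) by apply/H; exists l.
    have := congr1 (fun z : BT G R => z (e, l)) E.
    rewrite /wel !belemE eqxx xpair_eqE eqxx /=.
    case: (eqVneq l l') => [El _|nel]; last by move=> /= /eqP; rewrite (negbTE nz).
    by move: ne; rewrite -dl -dl' El eqxx.
  + move=> f Ff; case: (eqVneq (idE A e) 0) => [z|nz].
      exists [:: 0]; split => //.
        move=> x; rewrite inE; split.
          move/eqP ->; have [l [rl dl]] := Fe_ex Ff; exists l; split => //.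
          by rewrite /wel z belem0.
        by case=> l [_ _ ->]; rewrite /wel z belem0.
      rewrite big_seq1; apply/ffunP => p; rewrite omega_coef z if_same ffunE //.
    exists (map (wel A e) (enum [pred l | (gr l == e) && (gd l == f)])); split.
    * rewrite map_inj_uniq ?enum_uniq // => l l' E.
      have := congr1 (fun z : BT G R => z (e, l)) E.
      rewrite /wel !belemE eqxx xpair_eqE eqxx /=.
      case: (eqVneq l l') => [//|nel]; by move=> /= /eqP; rewrite (negbTE nz).
    * move=> x; split.
        case/mapP => l; rewrite mem_enum inE => /andP [/eqP rl /eqP dl] ->.
        by exists l.
      case=> l [rl dl ->]; apply: map_f; by rewrite mem_enum inE rl dl !eqxx.
    * by rewrite /omega big_map big_enum /=; apply: eq_bigl => l; rewrite inE.
- apply/ffunP => [[p1 p2]]; rewrite /we /wel sum_belemE sum_ffunE /=.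
  under eq_bigr => f _ do rewrite omega_coef /=.
  case: (boolP ((p1 == e) && (gr p2 == e))) => [/andP [/eqP -> /eqP rp2]|H].
    rewrite big_mkcond (sum_single (j := gd p2)) /=; first by rewrite Fe_dl // rp2 !eqxx.
    by move=> f /nz_if /andP [_ /nz_if /andP [/and3P [_ _ /eqP ->] _]].
  rewrite big1 // => f _; case: ifP => // /and3P [pe rp _].
  by move: H; rewrite pe rp.
- split.
    move=> f Ff; split; first by apply: omega_inBe.
      rewrite mul_omega; last by apply: omega_inBe.
      apply/ffunP => p; rewrite ffunE.
      case: ifP => // /negbT ne; rewrite omega_coef (negbTE ne) !andbF //.
    by move=> x Bx; rewrite mul_omega // omega_mul.
  move=> f f' Ff Ff' ne; rewrite mul_omega; last by apply: omega_inBe.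
      apply/ffunP => p.
  rewrite !ffunE; case: ifP => // /eqP dp.
  have ne' : f' != f by rewrite eq_sym.
  by rewrite omega_coef dp (negbTE ne') !andbF.
- move=> f Ff; split.
  + exact: Bef_char.
  + split.
      apply/Bef_char; split; [move=> p; rewrite ffunE; exact: E_0 | by move=> *; rewrite ffunE].
    move=> x y /Bef_char [Bx Hx] /Bef_char [By Hy]; apply/Bef_char; split.
      move=> p; rewrite !ffunE; apply: E_sub; [exact: Bx | exact: By].
    by move=> g h H; rewrite !ffunE Hx ?Hy // subr0.
  + move=> a x /Bef_char [Bx Hx]; apply/Bef_char; split.
      move=> p; rewrite ffunE; exact: EidZ (Bx p).
    by move=> g h H; rewrite ffunE Hx // scaler0.
  + move=> a x Ba /Bef_char [Bx Hx]; split; apply/Bef_char; split.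
    * exact: Bmul_inB (proj1 Ba).
    * move=> p1 p2 H; apply: Bmul_zero => k g nza nzx dg dk pE /=.
      move/negP: H; apply.
      have [dk' rk rg] := Be_nz Ba nza.
      have [dm rm rp2 dp2] := Hs_nz Hx nzx.
      rewrite /= in pE dk dg; by rewrite pE gd_mul // gr_mul // dm rk rp2 dp2 !eqxx.
    * exact: Bmul_inB Bx.
    * move=> p1 p2 H; apply: Bmul_zero => k g nzx nza dg dk pE /=.
      move/negP: H; apply.
      have [dk' rk rg dgf] := Hs_nz Hx nzx.
      have [dm rm rp2] := Be_nz Ba nza.
      rewrite /= in pE dk dg; by rewrite pE gd_mul // gr_mul // dm rk rp2 -dg dgf !eqxx.
  + split.
      apply/Bef_char; split; first by case: (omega_inBe A he f).
      move=> g h H; rewrite omega_coef /=; case: ifP => // /and3P [/eqP ge /eqP rh /eqP dh].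
      by move: H; rewrite ge he (gre he) rh dh !eqxx.
    move=> x /Bef_char [Bx Hx]; have Bxe := Hs_inBe Bx Hx.
    by rewrite omega_mul // mul_omega // (Hs_restr Hx).
- split.
    move=> x Bx; exists (fun f => Bmul A x (omega A e f)); split.
      by move=> f _; exists x.
    apply/ffunP => [[p1 p2]]; rewrite sum_ffunE.
    under eq_bigr => f _ do rewrite mul_omega // ffunE /=.
    case: (eqVneq (x (p1, p2)) 0) => [->|nzx].
      by rewrite big1 // => f _; rewrite if_same.
    have [_ _ rp2] := Be_nz Bx nzx.
    rewrite big_mkcond (sum_single (j := gd p2)) /= ?Fe_dl ?eqxx //.
    by move=> f /nz_if /andP [_ /nz_if /andP [/eqP -> _]].
  move=> y y' H E f Ff; apply/ffunP => [[p1 p2]].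
  have := congr1 (fun z : BT G R => z (p1, p2)) E; rewrite !sum_ffunE.
  case: (eqVneq (gd p2) f) => [dp|ne].
    have Z : forall z : G -> BT G R, (forall f', f' \in Fe e -> Bef A e f' (z f')) ->
        \sum_(f' | f' \in Fe e) z f' (p1, p2) = z f (p1, p2).
      move=> z Hz; rewrite (bigD1 f) //= big1 ?addr0 // => f' /andP [Ff' nf'].
      apply/eqP; apply: contraT => /(nz0 _ _ _ Ff' (Hz f' Ff')) /= dp'.
      by move: nf'; rewrite -dp' dp eqxx.
    rewrite !Z //; move=> f' Ff'; [exact: (H f' Ff').2 | exact: (H f' Ff').1].
  move=> _.
  have Y0 : forall z : BT G R, Bef A e f z -> z (p1, p2) = 0.
    move=> z Bz; apply/eqP; apply: contraT => /(nz0 _ _ _ Ff Bz) /= dp.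
    by move: ne; rewrite dp eqxx.
  by rewrite !Y0 //; [exact: (H f Ff).2 | exact: (H f Ff).1].
Qed.
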